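(* Let $C>0$ be a constant such that $-\widetilde{\sigma}(\beta)\geq C\, l(\beta)$ for all positive $b$-braids $\beta$. Then for every positive $b$-braid $\beta$, $-\sigma(\beta)\geq C\, l(\beta)-b+1$.
   Context: A positive $b$-braid is an element of the braid group $B_b$, with standard generators $a_1,\dots,a_{b-1}$, that can be written as a word using only positive powers of the generators; its length $l(\beta)$ is the number of letters in such a word. $\sigma(\beta)$ is the signature of the standard closure of $\beta$, with sign convention such that $\sigma(a_1^n)=1-n$ for $n\ge 1$. The asymptotic signature is $\widetilde{\sigma}(\beta)=\lim_{i\to\infty}\sigma(\beta^i)/i$. *)

(* Defs.v *)
From Stdlib Require Import ClassicalEpsilon.
From Stdlib Require Import Reals.
From HB Require Import structures.
From mathcomp Require Import all_boot all_order all_algebra.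
Set Implicit Arguments. Unset Strict Implicit. Unset Printing Implicit Defensive.
Import Order.TTheory GRing.Theory Num.Theory.

Definition asbool (P : Prop) : bool :=
  if excluded_middle_informative P then true else false.

Local Open Scope ring_scope.

Definition posdef_subspace (n k : nat) (A : 'M[rat]_n) : Prop :=
  exists B : 'M[rat]_(k, n),
    row_free B /\
    forall x : 'rV[rat]_k, x != 0 ->
      0 < ((x *m B) *m A *m (x *m B)^T) ord0 ord0.

Definition pos_index (n : nat) (A : 'M[rat]_n) : nat :=
  \max_(k < n.+1 | asbool (posdef_subspace k A)) k.

Definition neg_index (n : nat) (A : 'M[rat]_n) : nat := pos_index (- A).

(* A positive b-braid word is a sequence of letters in 'I_(b.-1);
   the letter k : 'I_(b.-1) stands for the generator a_(k+1). *)
Local Open Scope nat_scope.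

Definition letter_positions (w : seq nat) (k : nat) : seq nat :=
  [seq i <- iota 0 (size w) | nth 0 w i == k].

(* They form a basis of H_1 of the canonical Seifert surface
   of the closure (b disks, one half-twisted band per letter). *)
Definition bricks (b : nat) (w : seq nat) : seq (nat * nat * nat) :=
  flatten [seq (let ps := letter_positions w k in
                [seq (k, pq.1, pq.2) | pq <- zip ps (behead ps)])
          | k <- iota 0 b.-1].

(* symmetrized Seifert form V + V^T evaluated on two bricks *)
Local Open Scope ring_scope.
Definition brick_entry (x y : nat * nat * nat) : rat :=
  let: (k, p, q) := x in
  let: (l, r, s) := y in
  if x == y then (-2 : rat)
  else if (k == l) && ((q == r) || (s == p)) then (1 : rat)
  else if l == k.+1 then
    (if [&& (p < r)%N, (r < q)%N & (q < s)%N] then (1 : rat)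
     else if [&& (r < p)%N, (p < s)%N & (s < q)%N] then (-1 : rat) else (0 : rat))
  else if k == l.+1 then
    (if [&& (r < p)%N, (p < s)%N & (s < q)%N] then (1 : rat)
     else if [&& (p < r)%N, (r < q)%N & (q < s)%N] then (-1 : rat) else (0 : rat))
  else (0 : rat).

Local Close Scope ring_scope.
Definition word_nat (b : nat) (w : seq 'I_b.-1) : seq nat := [seq nat_of_ord k | k <- w].

Definition seifert_sym (b : nat) (w : seq 'I_b.-1) :
  'M[rat]_(size (bricks b (word_nat w))) :=
  let br := bricks b (word_nat w) in
  \matrix_(i < size br, j < size br)
     brick_entry (nth (0, 0, 0) br i) (nth (0, 0, 0) br j).

(* signature of the closure of the positive braid word w, as a real number;
   sign convention: sigma(a_1^n) = 1 - n *)
Definition braid_signature (b : nat) (w : seq 'I_b.-1) : R :=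
  Rminus (INR (pos_index (seifert_sym w))) (INR (neg_index (seifert_sym w))).

Definition braid_length (b : nat) (w : seq 'I_b.-1) : nat := size w.

Definition braid_pow (b : nat) (w : seq 'I_b.-1) (i : nat) : seq 'I_b.-1 :=
  flatten (nseq i w).

(* Main.v *)
Require Import Defs.
From Stdlib Require Import Reals Lra Lia ClassicalEpsilon.
From mathcomp Require Import all_boot all_order all_algebra.
From mathcomp Require Import zify ring.
Set Implicit Arguments. Unset Strict Implicit. Unset Printing Implicit Defensive.
Import Order.TTheory GRing.Theory Num.Theory.

Lemma sorted_all_gt (x : nat) s : sorted ltn (x :: s) -> all (fun r => x < r) s.
Proof.
move=> Hs; have := order_path_min ltn_trans Hs; by [].
Qed.

Lemma zipP (s : seq nat) p q : sorted ltn s ->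
  ((p, q) \in zip s (behead s)) =
  [&& p \in s, q \in s, p < q & all (fun r => ~~ ((p < r) && (r < q))) s].
Proof.
elim: s => [|x s IH] //= Hs.
case: s IH Hs => [|y s] IH Hs.
  rewrite /= !inE; apply/esym; case: eqP => //= ->; case: eqP => //= ->.
  by rewrite ltnn.
have Hxy : x < y by case/andP: Hs.
have Hs' : sorted ltn (y :: s) by case/andP: Hs.
have Hall := sorted_all_gt Hs'.
have Hall' := sorted_all_gt Hs.
rewrite [zip _ _]/= in_cons IH // /=.
apply/idP/idP.
- case/orP.
  + case/eqP => -> ->.
    rewrite !inE !eqxx /= orbT Hxy /= !ltnn /=.
    apply/allP => r Hr /=.
    move/allP: Hall => /(_ r Hr) Hyr. apply/negP => /andP[_ h]. lia.
  + case/and5P => Hp Hq Hpq Hy Ha.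
    rewrite Hpq Hy Ha !andbT (in_cons x (y :: s) p) Hp (in_cons x (y :: s) q) Hq !orbT /=.
    move: Hp; rewrite inE => /orP[/eqP ->|Hp]; first by apply/negP => /andP[h _]; lia.
    move/allP: Hall => /(_ p Hp) h. apply/negP => /andP[h1 _]; lia.
- case/and5P => Hp Hq Hpq Hx /andP[Hy Ha].
  move: Hp; rewrite inE => /orP[/eqP Ep|Hp].
  + subst p. apply/orP; left.
    move: Hq; rewrite !inE => /orP[/eqP Eq|/orP[/eqP Eq|Hq]]; first (subst; by rewrite ltnn in Hpq).
      by subst.
    move/allP: Hall => /(_ q Hq) hyq.
    move: Hy. rewrite Hxy /= => Hy. lia.
  + apply/orP; right.
    have hxp : x < p by move/allP: Hall' => /(_ p Hp).
    rewrite Hp Hpq Ha Hy /=.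
    move: Hq; rewrite inE => /orP[/eqP Eq|Hq]; [lia | by rewrite Hq].
Qed.

Definition isbrick (W : seq nat) (x : nat * nat * nat) : bool :=
  let: (k, p, q) := x in
  [&& p < q, q < size W, nth 0 W p == k, nth 0 W q == k &
      all (fun r => nth 0 W r != k) (iota p.+1 (q - p.+1))].

Lemma lp_mem W k r : (r \in letter_positions W k) = (r < size W) && (nth 0 W r == k).
Proof. by rewrite /letter_positions mem_filter mem_iota add0n andbC. Qed.

Lemma lp_sorted W k : sorted ltn (letter_positions W k).
Proof. apply: sorted_filter; [exact: ltn_trans | exact: iota_ltn_sorted]. Qed.

Lemma all_equiv W k p q : q < size W ->
  all (fun r => ~~ ((p < r) && (r < q))) (letter_positions W k) =
  all (fun r => nth 0 W r != k) (iota p.+1 (q - p.+1)).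
Proof.
move=> Hq; apply/allP/allP => H r.
- rewrite mem_iota => /andP[h1 h2]; apply/negP => Hr.
  have : r \in letter_positions W k by rewrite lp_mem Hr andbT; lia.
  move/H; rewrite h1 /=; apply/negP/negPn; lia.
- rewrite lp_mem => /andP[h1 h2]; apply/negP => /andP[h3 h4].
  have : r \in iota p.+1 (q - p.+1) by rewrite mem_iota; lia.
  by move/H; rewrite h2.
Qed.

Lemma mem_bricks b W k p q :
  ((k, p, q) \in bricks b W) = (k < b.-1) && isbrick W (k, p, q).
Proof.
rewrite /bricks /isbrick; apply/idP/idP.
- case/flattenP => s /mapP[k' Hk' ->] /mapP[[p' q'] Hpq [Ek Ep Eq]].
  subst k' p' q'.
  move: Hk'; rewrite mem_iota add0n => /andP[_ ->] /=.
  move: Hpq; rewrite zipP ?lp_sorted // !lp_mem => /and4P[/andP[hp ->] /andP[hq ->] -> Ha].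
  by rewrite hq /= -all_equiv.
- case/andP => Hk /and5P[Hpq Hq Hp Hqk Ha].
  apply/flattenP; eexists; first by apply/mapP; exists k; [rewrite mem_iota; lia | reflexivity].
  apply/mapP; exists (p, q) => //.
  rewrite zipP ?lp_sorted // !lp_mem Hp Hqk Hq Hpq andbT /= all_equiv //.
  by rewrite Ha andbT; lia.
Qed.

Lemma zip_mem1 (s t : seq nat) a c : (a, c) \in zip s t -> a \in s.
Proof.
elim: s t => [|x s IH] [|y t] //=.
rewrite !inE => /orP[/eqP [-> _]|/IH ->]; by rewrite ?eqxx ?orbT.
Qed.

Lemma zip_uniq (s t : seq nat) : uniq s -> uniq (zip s t).
Proof.
elim: s t => [|x s IH] [|y t] //= /andP[nx us].
rewrite IH // andbT; apply/negP => /zip_mem1; by rewrite (negbTE nx).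
Qed.

Lemma uniq_bricks b W : uniq (bricks b W).
Proof.
rewrite /bricks.
have : uniq (iota 0 b.-1) by exact: iota_uniq.
elim: (iota 0 b.-1) => [|k L IH] //= /andP[nk uL].
rewrite cat_uniq IH // andbT; apply/andP; split.
  rewrite map_inj_uniq; last by move=> [a c] [a' c'] [-> ->].
  apply: zip_uniq; rewrite /letter_positions; apply: filter_uniq; exact: iota_uniq.
apply/hasP => [[x /flattenP [s /mapP [k' Hk' ->] Hx1] Hx2]].
move: Hx1 => /mapP [[p q] _ Ex]; move: Hx2 => /mapP [[p' q'] _ Ex'].
rewrite Ex in Ex'; case: Ex' => Ek _ _; subst k'.
by rewrite Hk' in nk.
Qed.

Lemma isbrick_catl (u v : seq nat) k p q : q < size u ->
  isbrick (u ++ v) (k, p, q) = isbrick u (k, p, q).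
Proof.
move=> Hq; rewrite /isbrick size_cat.
case: (ltnP p q) => hpq //=.
rewrite !nth_cat Hq (ltn_trans hpq Hq) ltn_addr //=.
congr [&& _, _ & _].
apply: eq_in_all => r; rewrite mem_iota => /andP[_ h].
by rewrite nth_cat (_ : r < size u); [|lia].
Qed.

Lemma isbrick_catr (u v : seq nat) k p q :
  isbrick (u ++ v) (k, p + size u, q + size u) = isbrick v (k, p, q).
Proof.
rewrite /isbrick size_cat ltn_add2r (addnC (size u) (size v)) ltn_add2r.
rewrite !nth_cat !ltnNge !leq_addl /= !addnK.
have -> : q + size u - (p + size u).+1 = q - p.+1 by lia.
have -> : (p + size u).+1 = size u + p.+1 by lia.
rewrite iotaDl all_map; congr [&& _, _, _, _ & _].
apply: eq_all => r /=; rewrite nth_cat ltnNge leq_addr /=.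
by rewrite addKn.
Qed.

Lemma be_shift k p q l r s c :
  brick_entry (k, p + c, q + c) (l, r + c, s + c) = brick_entry (k, p, q) (l, r, s).
Proof.
rewrite /brick_entry !xpair_eqE !eqn_add2r !ltn_add2r.
by [].
Qed.

Lemma be_sep k p q l r s : p < q -> q < r -> r < s ->
  brick_entry (k, p, q) (l, r, s) = 0%R /\ brick_entry (l, r, s) (k, p, q) = 0%R.
Proof.
move=> h1 h2 h3; rewrite /brick_entry !xpair_eqE.
have E0 : (p == r) = false by apply/negbTE; lia.
have E1 : (r == p) = false by apply/negbTE; lia.
have E2 : (q == r) = false by apply/negbTE; lia.
have E3 : (s == p) = false by apply/negbTE; lia.
have E4 : (r == q) = false by apply/negbTE; lia.
have E5 : (p == s) = false by apply/negbTE; lia.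
have E6 : (r < q) = false by apply/negbTE; lia.
have E7 : (r < p) = false by apply/negbTE; lia.
have E8 : (p < r < q) = false by apply/negbTE; lia.
have E9 : (r < p < s) = false by apply/negbTE; lia.
rewrite ?E0 ?E1 ?E2 ?E3 ?E4 ?E5 ?E6 ?E7 ?E8 ?E9.
rewrite /= ?andbF /=.
by split; repeat case: ifP.
Qed.

Lemma be_sym x y : brick_entry x y = brick_entry y x.
Proof.
case: x => [[k p] q]; case: y => [[l r] s].
rewrite /brick_entry [(l, r, s) == _]eq_sym.
case: eqP => // _.
rewrite [l == k]eq_sym [s == p]eq_sym [q == r]eq_sym [r == q]eq_sym [p == s]eq_sym.
rewrite [(q == r) || _]orbC.
case: (k == l) => /=; [case: ((s == p) || (q == r)) => //|];
  (case E1: (l == k.+1); case E2: (k == l.+1) => //;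
   move/eqP: E1; move/eqP: E2; lia).
Qed.

Lemma nointer W k p q r : isbrick W (k, p, q) -> p < r < q -> nth 0 W r != k.
Proof.
case/and5P => _ _ _ _ /allP H h; apply: H; rewrite mem_iota; lia.
Qed.

Lemma isbrick_lt W k p q : isbrick W (k, p, q) -> p < q /\ q < size W /\ nth 0 W p = k /\ nth 0 W q = k.
Proof. by case/and5P => h1 h2 /eqP h3 /eqP h4 _. Qed.

Definition shiftb c (x : nat * nat * nat) := (x.1.1, x.1.2 + c, x.2 + c).

Section Cat.
Variables (b : nat) (u v : seq nat).
Let Bu := bricks b u.
Let Bv := bricks b v.
Let Buv := bricks b (u ++ v).

Lemma memBu x : x \in Bu -> x \in Buv.
Proof.
case: x => [[k p] q]; rewrite /Bu /Buv !mem_bricks => /andP[-> H].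
have [_ [hq _]] := isbrick_lt H.
by rewrite isbrick_catl.
Qed.

Lemma memBv x : x \in Bv -> shiftb (size u) x \in Buv.
Proof.
case: x => [[k p] q]; rewrite /Bv /Buv /shiftb /= !mem_bricks => /andP[-> H].
by rewrite isbrick_catr.
Qed.

Lemma count3 (T : Type) (A B C : pred T) (s : seq T) :
  (forall x, [|| A x, B x | C x]) -> size s <= count A s + count B s + count C s.
Proof.
move=> H; elim: s => //= x s IH.
have := H x; case: (A x); case: (B x); case: (C x) => //= _; lia.
Qed.

Lemma size_cat_bound : size Buv <= size Bu + size Bv + b.-1.
Proof.
set su := size u.
pose A := fun x : nat * nat * nat => x.2 < su.
pose B := fun x : nat * nat * nat => su <= x.1.2.
pose C := fun x : nat * nat * nat => (x.1.2 < su) && (su <= x.2).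
have H3 : forall x, [|| A x, B x | C x].
  move=> [[k p] q]; rewrite /A /B /C /=.
  case: (ltnP q su) => //=; case: (leqP su p) => //= h1 h2; by rewrite orbT.
have HA : count A Buv <= size Bu.
  rewrite -size_filter; apply: uniq_leq_size; first by apply: filter_uniq; exact: uniq_bricks.
  move=> [[k p] q]; rewrite mem_filter /A /= /Buv /Bu !mem_bricks.
  by case/andP => hq /andP[-> H]; rewrite -(isbrick_catl v) .
have HB : count B Buv <= size Bv.
  rewrite -size_filter.
  pose uns := fun x : nat * nat * nat => (x.1.1, x.1.2 - su, x.2 - su).
  rewrite -(size_map uns); apply: uniq_leq_size.
    rewrite map_inj_in_uniq; first by apply: filter_uniq; exact: uniq_bricks.
    move=> [[k p] q] [[k' p'] q']; rewrite !mem_filter /B /= /Buv !mem_bricks.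
    move=> /andP[h1 /andP[_ H1]] /andP[h2 /andP[_ H2]] [E1 E2 E3].
    have := isbrick_lt H1; have := isbrick_lt H2.
    subst k'; move=> [? _] [? _]. congr (_, _, _); lia.
  move=> y /mapP[[[k p] q] Hx ->]; move: Hx.
  rewrite mem_filter /B /Buv /Bv !mem_bricks => /andP[h1 /andP[-> H]].
  have [hpq _] := isbrick_lt H.
  rewrite /= in h1.
  change (true && isbrick v (k, p - su, q - su)).
  rewrite -(isbrick_catr u v k (p - su) (q - su)).
  have h2 : su <= q by lia.
  by rewrite (subnK h1) (subnK h2) H.
have HC : count C Buv <= b.-1.
  rewrite -size_filter -(size_map (fun x : nat * nat * nat => x.1.1)).
  rewrite -[b.-1](size_iota 0); apply: uniq_leq_size.
    rewrite map_inj_in_uniq; first by apply: filter_uniq; exact: uniq_bricks.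
    move=> [[k p] q] [[k' p'] q']; rewrite !mem_filter /C /= /Buv !mem_bricks.
    move=> /andP[/andP[h1 h1'] /andP[_ H1]] /andP[/andP[h2 h2'] /andP[_ H2]] E.
    subst k'.
    have [l1 [_ [e1 f1]]] := isbrick_lt H1; have [l2 [_ [e2 f2]]] := isbrick_lt H2.
    have Ep : p = p'.
      case: (ltngtP p p') => // h.
      - by have := nointer H1 (_ : p < p' < q); rewrite e2 eqxx; move/(_ ltac:(lia)).
      - by have := nointer H2 (_ : p' < p < q'); rewrite e1 eqxx; move/(_ ltac:(lia)).
    subst p'.
    case: (ltngtP q q') => [h|h|->] //.
    - by have := nointer H2 (_ : p < q < q'); rewrite f1 eqxx; move/(_ ltac:(lia)).
    - by have := nointer H1 (_ : p < q' < q); rewrite f2 eqxx; move/(_ ltac:(lia)).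
  move=> y /mapP[[[k p] q] Hx ->]; move: Hx.
  rewrite mem_filter /Buv !mem_bricks => /andP[_ /andP[hk _]] /=.
  by rewrite mem_iota; lia.
have := count3 Buv H3; lia.
Qed.

End Cat.


Open Scope ring_scope.

Definition qf n (A : 'M[rat]_n) (x : 'rV[rat]_n) : rat := (x *m A *m x^T) ord0 ord0.

Lemma qf0 n (A : 'M[rat]_n) : qf A 0 = 0.
Proof. by rewrite /qf !mul0mx mxE. Qed.

Lemma qfN n (A : 'M[rat]_n) x : qf (- A) x = - qf A x.
Proof. by rewrite /qf mulmxN mulNmx mxE. Qed.

Lemma qfM n m (A : 'M[rat]_n) (E : 'M[rat]_(m, n)) x :
  qf (E *m A *m E^T) x = qf A (x *m E).
Proof. by rewrite /qf trmx_mul !mulmxA. Qed.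

Lemma posdef_free n k (A : 'M[rat]_n) (B : 'M[rat]_(k, n)) :
  (forall x : 'rV_k, x != 0 -> 0 < qf A (x *m B)) -> row_free B.
Proof.
move=> H; apply: inj_row_free => v Hv; apply/eqP; apply/negPn/negP => /H.
by rewrite Hv qf0 ltxx.
Qed.

Lemma posdefP n k (A : 'M[rat]_n) (B : 'M[rat]_(k, n)) :
  (forall x : 'rV_k, x != 0 -> 0 < qf A (x *m B)) -> posdef_subspace k A.
Proof. by move=> H; exists B; split; [apply: posdef_free H | exact: H]. Qed.

Lemma asboolT (P : Prop) : P -> asbool P.
Proof. by rewrite /asbool; case: excluded_middle_informative. Qed.

Lemma asboolE (P : Prop) : asbool P -> P.
Proof. by rewrite /asbool; case: excluded_middle_informative. Qed.

Lemma posdef_le n k (A : 'M[rat]_n) : posdef_subspace k A -> (k <= n)%N.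
Proof.
case=> B [/eqP fB _]; by rewrite -fB rank_leq_col.
Qed.

Lemma pos_ge n k (A : 'M[rat]_n) : posdef_subspace k A -> (k <= pos_index A)%N.
Proof.
move=> H; have Hk := posdef_le H.
rewrite /pos_index.
have Hk' : (k < n.+1)%N by [].
exact: (@leq_bigmax_cond _ (fun i : 'I_n.+1 => asbool (posdef_subspace i A))
          (fun i : 'I_n.+1 => nat_of_ord i) (Ordinal Hk') (asboolT H)).
Qed.

Lemma posdef0 n (A : 'M[rat]_n) : posdef_subspace 0 A.
Proof.
apply: (@posdefP _ _ _ 0) => x; by rewrite (thinmx0 x) eqxx.
Qed.

Lemma pos_att n (A : 'M[rat]_n) : posdef_subspace (pos_index A) A.
Proof.
rewrite /pos_index.
have H0 : (0 < #|(fun i : 'I_n.+1 => asbool (posdef_subspace i A))|)%N.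
  apply/card_gt0P; exists ord0; rewrite /in_mem /=; apply: asboolT; exact: posdef0.
case: (eq_bigmax_cond (fun i : 'I_n.+1 => nat_of_ord i) H0) => i Hi ->.
exact: asboolE.
Qed.

Lemma pos_le n (A : 'M[rat]_n) : (pos_index A <= n)%N.
Proof. exact: posdef_le (pos_att A). Qed.

Lemma mxE_add m n (A B : 'M[rat]_(m,n)) i j : (A + B) i j = A i j + B i j.
Proof. by rewrite mxE. Qed.
Lemma mxE_scale m n c (A : 'M[rat]_(m,n)) i j : (c *: A) i j = c * A i j.
Proof. by rewrite mxE. Qed.

Lemma inter_bound n k r (A : 'M[rat]_n) (V : 'M[rat]_(k, n)) (W : 'M[rat]_(r, n)) :
  (forall x : 'rV_k, x != 0 -> 0 < qf A (x *m V)) ->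
  (forall z : 'rV_r, qf A (z *m W) <= 0) ->
  (k + \rank W <= n)%N.
Proof.
move=> HV HW.
have fV : row_free V := posdef_free HV.
have Hcap : (V :&: W)%MS = 0.
  apply/row_matrixP => i; rewrite row0.
  have : (row i (V :&: W) <= V :&: W)%MS by exact: row_sub.
  rewrite sub_capmx => /andP[/submxP[x Hx] /submxP[z Hz]].
  have := HW z; rewrite -Hz Hx.
  case: (eqVneq x 0) => [-> | nx]; first by rewrite mul0mx.
  by move: (HV x nx); rewrite -Hx => h1; rewrite leNgt h1.
have := mxrank_disjoint_sum Hcap.
move: fV => /eqP ->; move=> <-; exact: rank_leq_col.
Qed.

Lemma complement n (A : 'M[rat]_n) : A^T = A ->
  exists W : 'M[rat]_n, (forall z : 'rV_n, qf A (z *m W) <= 0) /\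
                        (n <= \rank W + pos_index A)%N.
Proof.
move=> sA.
have [V [fV HV]] := pos_att A.
set k := pos_index A in V fV HV *.
exists (kermx (A *m V^T)); split; last first.
  rewrite mxrank_ker.
  have : (\rank (A *m V^T) <= k)%N by exact: rank_leq_col.
  have : (\rank (A *m V^T) <= n)%N by exact: rank_leq_row.
  lia.
move=> z; rewrite leNgt; apply/negP => Hpos.
set w := z *m kermx (A *m V^T) in Hpos.
have Hw : w *m A *m V^T = 0.
  by rewrite /w -mulmxA -mulmxA mulmx_ker mulmx0.
clearbody w.
have : posdef_subspace (1 + k) A.
  apply: (@posdefP _ _ _ (col_mx w V)) => x nx.
  rewrite -[x]hsubmxK mul_row_col.
  set a := lsubmx x; set y := rsubmx x.
  have Hcross1 : a *m w *m A *m V^T *m y^T = 0.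
    have -> : a *m w *m A *m V^T = a *m (w *m A *m V^T) by rewrite !mulmxA.
    by rewrite Hw mulmx0 mul0mx.
  have Hcross2 : ((y *m V) *m A *m (a *m w)^T) ord0 ord0 = 0.
    have -> : ((y *m V) *m A *m (a *m w)^T) ord0 ord0 = (((y *m V) *m A *m (a *m w)^T)^T) ord0 ord0 by rewrite [RHS]mxE.
    rewrite !trmx_mul !trmxK sA !mulmxA.
    move/matrixP/(_ ord0 ord0): (Hcross1); rewrite [in RHS]mxE => H.
    exact H.
  have E : qf A (a *m w + y *m V) = qf A (a *m w) + qf A (y *m V).
    rewrite /qf linearD /= !mulmxDl !mulmxDr !mxE_add.
    have H1 : ((a *m w) *m A *m (y *m V)^T) ord0 ord0 = 0.
      rewrite trmx_mul !mulmxA.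
      move/matrixP/(_ ord0 ord0): (Hcross1); rewrite [in RHS]mxE => H.
      exact H.
    by rewrite Hcross2 H1 add0r addr0.
  have Ea : qf A (a *m w) = (a ord0 ord0) ^+ 2 * qf A w.
    rewrite {1}[a]mx11_scalar mul_scalar_mx /qf -scalemxAl linearZ /=.
    by rewrite -scalemxAr -scalemxAl !mxE_scale expr2 mulrA.
  have Hy : 0 <= qf A (y *m V).
    case: (eqVneq y 0) => [->|ny]; first by rewrite mul0mx qf0.
    exact: ltW (HV y ny).
  rewrite E Ea.
  case: (eqVneq (a ord0 ord0) 0) => [a0|an0].
    have ay : a = 0 by rewrite [a]mx11_scalar a0 raddf0.
    have ny : y != 0.
      apply: contra nx => /eqP y0.
      by rewrite -[x]hsubmxK -/a -/y ay y0 row_mx0.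
    by rewrite a0 expr0n /= mul0r add0r HV.
  apply: ltr_pwDl => //.
  by rewrite mulr_gt0 // exprn_even_gt0.
move/pos_ge; rewrite -/k; lia.
Qed.

Lemma pos_cong n m (A : 'M[rat]_n) (E : 'M[rat]_(m, n)) :
  (pos_index (E *m A *m E^T) <= pos_index A)%N.
Proof.
have [V [_ HV]] := pos_att (E *m A *m E^T).
apply: pos_ge; apply: (@posdefP _ _ _ (V *m E)) => x nx.
by rewrite mulmxA -qfM; exact: HV.
Qed.

Lemma pos_cong_up n m (A : 'M[rat]_n) (E : 'M[rat]_(m, n)) :
  A^T = A -> row_free E ->
  (pos_index A + m <= pos_index (E *m A *m E^T) + n)%N.
Proof.
move=> sA fE.
have sX : (E *m A *m E^T)^T = E *m A *m E^T by rewrite !trmx_mul trmxK sA mulmxA.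
have [W [HW Hr]] := complement sX.
have [V [_ HV]] := pos_att A.
have := @inter_bound _ _ _ A V (W *m E) HV.
rewrite mxrankMfree //.
have H : forall z : 'rV_m, qf A (z *m (W *m E)) <= 0.
  by move=> z; rewrite mulmxA -qfM.
move/(_ H) => H2; lia.
Qed.

Lemma qf_block s t (A : 'M[rat]_s) (B : 'M[rat]_t) (y : 'rV_s) (z : 'rV_t) :
  qf (block_mx A 0 0 B) (row_mx y z) = qf A y + qf B z.
Proof.
rewrite /qf mul_row_block !mulmx0 ?mul0mx addr0 add0r tr_row_mx mul_row_col.
by rewrite mxE_add.
Qed.

Lemma pos_block_ge s t (A : 'M[rat]_s) (B : 'M[rat]_t) :
  (pos_index A + pos_index B <= pos_index (block_mx A 0 0 B))%N.
Proof.
have [VA [_ HA]] := pos_att A.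
have [VB [_ HB]] := pos_att B.
apply: pos_ge; apply: (@posdefP _ _ _ (block_mx VA 0 0 VB)) => x nx.
rewrite -[x]hsubmxK mul_row_block !mulmx0 ?mul0mx addr0 add0r qf_block.
set a := lsubmx x; set b := rsubmx x.
have Ha : 0 <= qf A (a *m VA).
  case: (eqVneq a 0) => [->|na]; [by rewrite mul0mx qf0 | exact: ltW (HA a na)].
have Hb : 0 <= qf B (b *m VB).
  case: (eqVneq b 0) => [->|nb]; [by rewrite mul0mx qf0 | exact: ltW (HB b nb)].
case: (eqVneq a 0) => [a0|na]; last by apply: ltr_pwDl => //; exact: HA.
case: (eqVneq b 0) => [b0|nb]; last by apply: ltr_pwDr => //; exact: HB.
by move: nx; rewrite -[x]hsubmxK -/a -/b a0 b0 row_mx0 eqxx.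
Qed.

Lemma pos_block_le s t (A : 'M[rat]_s) (B : 'M[rat]_t) :
  A^T = A -> B^T = B ->
  (pos_index (block_mx A 0 0 B) <= pos_index A + pos_index B)%N.
Proof.
move=> sA sB.
have [WA [HA rA]] := complement sA.
have [WB [HB rB]] := complement sB.
have [V [_ HV]] := pos_att (block_mx A 0 0 B).
have := @inter_bound _ _ _ _ V (block_mx WA 0 0 WB) HV.
rewrite rank_diag_block_mx.
have H : forall z : 'rV_(s + t), qf (block_mx A 0 0 B) (z *m block_mx WA 0 0 WB) <= 0.
  move=> z; rewrite -[z]hsubmxK mul_row_block !mulmx0 ?mul0mx addr0 add0r qf_block.
  by rewrite -[0]addr0 lerD.
move/(_ H) => H2; lia.
Qed.


Lemma conj_rowsub N m (h : 'I_m -> 'I_N) (M : 'M[rat]_N) :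
  rowsub h 1%:M *m M *m (rowsub h 1%:M)^T = \matrix_(i, j) M (h i) (h j).
Proof.
apply/matrixP => i j; rewrite mul_rowsub_mx mul1mx !mxE.
rewrite (bigD1 (h j)) //= big1 ?addr0.
  by rewrite !mxE eqxx mulr1n mulr1.
by move=> k nk; rewrite !mxE eq_sym (negbTE nk) mulr0n mulr0.
Qed.

Lemma rowsub_free N m (h : 'I_m -> 'I_N) : injective h -> row_free (rowsub h (1%:M : 'M[rat]_N)).
Proof.
move=> ih.
have E : rowsub h (1%:M : 'M[rat]_N) *m 1%:M *m (rowsub h 1%:M)^T = 1%:M.
  rewrite conj_rowsub; apply/matrixP => i j; rewrite !mxE.
  by rewrite (inj_eq ih).
have := mxrankM_maxl (rowsub h (1%:M : 'M[rat]_N) *m 1%:M) (rowsub h 1%:M)^T.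
rewrite E mxrank1 mulmx1 => H.
rewrite /row_free eqn_leq rank_leq_row; exact: H.
Qed.

Lemma pos_combo N s t (M : 'M[rat]_N) (A : 'M[rat]_s) (B : 'M[rat]_t)
  (h : 'I_(s + t) -> 'I_N) :
  injective h -> M^T = M -> A^T = A -> B^T = B ->
  \matrix_(i, j) M (h i) (h j) = block_mx A 0 0 B ->
  (pos_index A + pos_index B <= pos_index M)%N /\
  (pos_index (- M) + (s + t) <= pos_index (- A) + pos_index (- B) + N)%N.
Proof.
move=> ih sM sA sB HE.
have fE := rowsub_free ih.
set E := rowsub h (1%:M : 'M[rat]_N) in fE.
have HX : E *m M *m E^T = block_mx A 0 0 B by rewrite /E conj_rowsub.
split.
  have := pos_cong M E; rewrite HX => H1.
  have := pos_block_ge A B; lia.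
have sN : (- M)^T = - M by rewrite linearN /= sM.
have := pos_cong_up sN fE.
rewrite mulmxN mulNmx HX opp_block_mx !oppr0.
have sA' : (- A)^T = - A by rewrite linearN /= sA.
have sB' : (- B)^T = - B by rewrite linearN /= sB.
move=> H2; apply: (leq_trans H2); rewrite leq_add2r; exact: (pos_block_le sA' sB').
Qed.

Lemma seifE b (w : seq 'I_b.-1) i j :
  seifert_sym w i j = brick_entry (nth (0,0,0) (bricks b (word_nat w)) i)
                                  (nth (0,0,0) (bricks b (word_nat w)) j).
Proof. by rewrite /seifert_sym mxE. Qed.

Lemma seif_sym b (w : seq 'I_b.-1) : (seifert_sym w)^T = seifert_sym w.
Proof. by apply/matrixP => i j; rewrite mxE !seifE be_sym. Qed.

Lemma brick_bounds b W x : x \in bricks b W -> (x.1.2 < x.2 /\ x.2 < size W)%N.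
Proof.
case: x => [[k p] q]; rewrite mem_bricks => /andP[_ /isbrick_lt]; by case=> [h1 [h2 _]].
Qed.

Section Braid.
Variables (b : nat) (u v : seq 'I_b.-1).
Let Bu := bricks b (word_nat u).
Let Bv := bricks b (word_nat v).
Let Buv := bricks b (word_nat (u ++ v)).
Let su := size (word_nat u).

Lemma HUV : word_nat (u ++ v) = word_nat u ++ word_nat v.
Proof. by rewrite /word_nat map_cat. Qed.

Definition elt (i : 'I_(size Bu + size Bv)) : nat * nat * nat :=
  match split i with
  | inl a => nth (0,0,0) Bu a
  | inr c => shiftb su (nth (0,0,0) Bv c)
  end.

Lemma elt_in i : elt i \in Buv.
Proof.
rewrite /elt /Buv HUV; case: (split i) => a.
  by apply: memBu; apply: mem_nth.
by apply: memBv; apply: mem_nth.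
Qed.

Lemma elt_lt i : (index (elt i) Buv < size Buv)%N.
Proof. by rewrite index_mem elt_in. Qed.

Definition hh (i : 'I_(size Bu + size Bv)) : 'I_(size Buv) := Ordinal (elt_lt i).

Lemma nth_hh i : nth (0,0,0) Buv (hh i) = elt i.
Proof. exact: nth_index (elt_in i). Qed.

Lemma elt_inj : injective elt.
Proof.
move=> i j; rewrite /elt -{2}(splitK i) -{2}(splitK j).
case: (split i) => a; case: (split j) => c /=.
- move=> E; congr (unsplit (inl _)); apply/val_inj/eqP.
  by rewrite -(nth_uniq (0,0,0) (ltn_ord a) (ltn_ord c) (uniq_bricks _ _)) E.
- have := brick_bounds (mem_nth (0,0,0) (ltn_ord a)).
  have := brick_bounds (mem_nth (0,0,0) (ltn_ord c)).
  case: (nth _ Bu a) => [[k p] q]; case: (nth _ Bv c) => [[l r] s] /=.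
  rewrite /shiftb /= => [[h1 _]] [h2 h3] [_ E1 E2]; rewrite /su in E1 E2 *; lia.
- have := brick_bounds (mem_nth (0,0,0) (ltn_ord a)).
  have := brick_bounds (mem_nth (0,0,0) (ltn_ord c)).
  case: (nth _ Bv a) => [[k p] q]; case: (nth _ Bu c) => [[l r] s] /=.
  rewrite /shiftb /= => [[h1 h4]] [h2 h3] [_ E1 E2]; rewrite /su in E1 E2 *; lia.
- move=> E; congr (unsplit (inr _)); apply/val_inj/eqP.
  rewrite -(nth_uniq (0,0,0) (ltn_ord a) (ltn_ord c) (uniq_bricks _ _)).
  move: E; case: (nth _ Bv a) => [[k p] q]; case: (nth _ Bv c) => [[l r] s] /=.
  by rewrite /shiftb /= => [[-> /addIn -> /addIn ->]].
Qed.

Lemma hh_inj : injective hh.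
Proof.
move=> i j E; apply: elt_inj; by rewrite -!nth_hh E.
Qed.

Lemma block_eq :
  \matrix_(i, j) (seifert_sym (u ++ v)) (hh i) (hh j) =
  block_mx (seifert_sym u) 0 0 (seifert_sym v).
Proof.
apply/matrixP => i j; rewrite mxE seifE -/Buv !nth_hh /elt.
rewrite -(splitK i) -(splitK j).
case: (split i) => a; case: (split j) => c; rewrite !unsplitK /=.
- by rewrite block_mxEul seifE.
- rewrite block_mxEur mxE.
  have := brick_bounds (mem_nth (0,0,0) (ltn_ord c)).
  have := brick_bounds (mem_nth (0,0,0) (ltn_ord a)).
  case: (nth _ Bu a) => [[k p] q]; case: (nth _ Bv c) => [[l r] s] /= [h1 h2] [h3 h4].
  rewrite /shiftb /=.
  have [H _] := @be_sep k p q l (r + su) (s + su) h1 ltac:(rewrite /su; lia) ltac:(lia).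
  exact: H.
- rewrite block_mxEdl mxE.
  have := brick_bounds (mem_nth (0,0,0) (ltn_ord c)).
  have := brick_bounds (mem_nth (0,0,0) (ltn_ord a)).
  case: (nth _ Bu c) => [[k p] q]; case: (nth _ Bv a) => [[l r] s] /= [h3 h4] [h1 h2].
  rewrite /shiftb /=.
  have [_ H] := @be_sep k p q l (r + su) (s + su) h1 ltac:(rewrite /su; lia) ltac:(lia).
  exact: H.
- rewrite block_mxEdr seifE /shiftb.
  case: (nth _ Bv a) => [[k p] q]; case: (nth _ Bv c) => [[l r] s] /=.
  exact: be_shift.
Qed.
End Braid.


Close Scope ring_scope.
Open Scope R_scope.

Lemma INR_le (m n : nat) : (m <= n)%nat -> INR m <= INR n.
Proof. by move/ssrnat.leP; apply: le_INR. Qed.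

Lemma sig_cat b (u v : seq 'I_b.-1) :
  braid_signature u + braid_signature v - INR b.-1 <= braid_signature (u ++ v).
Proof.
have [H1 H2] := pos_combo (@hh_inj b u v) (seif_sym _) (seif_sym _) (seif_sym _) (block_eq u v).
have H3 := size_cat_bound b (word_nat u) (word_nat v).
rewrite -HUV in H3.
rewrite /braid_signature /neg_index.
move: H1 H2 H3.
set Pu := pos_index (seifert_sym u); set Pv := pos_index (seifert_sym v).
set Puv := pos_index (seifert_sym (u ++ v)).
set Nu := pos_index (GRing.opp (seifert_sym u)); set Nv := pos_index (GRing.opp (seifert_sym v)).
set Nuv := pos_index (GRing.opp (seifert_sym (u ++ v))).
move=> H1 H2 H3.
have H4 : (Nuv <= Nu + Nv + b.-1)%nat by lia.
have A1 := INR_le H1; have A2 := INR_le H4.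
rewrite !plus_INR in A1 A2; lra.
Qed.

Lemma bricks_nil b : bricks b [::] = [::].
Proof. by rewrite /bricks; elim: (iota 0 b.-1). Qed.

Lemma sig_nil b : braid_signature (b:=b) [::] = 0.
Proof.
have H1 := pos_le (seifert_sym (b:=b) [::]).
have H2 := pos_le (GRing.opp (seifert_sym (b:=b) [::])).
have E : size (bricks b (word_nat (@nil 'I_b.-1))) = 0%nat by rewrite /word_nat /= bricks_nil.
have H1' := leq_trans H1 (eq_leq E); have H2' := leq_trans H2 (eq_leq E).
rewrite /braid_signature /neg_index.
have -> : pos_index (seifert_sym (b:=b) [::]) = 0%nat by lia.
have -> : pos_index (GRing.opp (seifert_sym (b:=b) [::])) = 0%nat by lia.
by rewrite /= Rminus_0_r.
Qed.

Lemma sig_pow b (w : seq 'I_b.-1) n :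
  INR n * braid_signature w - INR n * INR b.-1 <= braid_signature (braid_pow w n).
Proof.
elim: n => [|n IH].
  rewrite /braid_pow /= sig_nil; lra.
have -> : braid_pow w n.+1 = w ++ braid_pow w n by [].
have := sig_cat w (braid_pow w n).
rewrite S_INR; lra.
Qed.

Lemma lim_bound (u : nat -> R) L c :
  Un_cv u L -> (forall n, (0 < n)%nat -> c <= u n) -> c <= L.
Proof.
move=> HL Hu; apply: Rnot_lt_le => Hlt.
have [N HN] := HL (c - L) ltac:(lra).
have := HN N.+1 ltac:(lia).
have := Hu N.+1 ltac:(lia).
rewrite /R_dist => h1 h2.
have := Rle_abs (u N.+1 - L); lra.
Qed.

Theorem mainTheorem6 (b : nat) (hb : (0 < b)%N) (C : R) (hC : 0 < C)
  (Hasym : forall w : seq 'I_b.-1,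
     exists L : R,
       Un_cv (fun i : nat => braid_signature (braid_pow w i) / INR i) L
       /\ - L >= C * INR (braid_length w)) :
  forall w : seq 'I_b.-1,
    - braid_signature w >= C * INR (braid_length w) - INR b + 1.
Proof.
move=> w.
have [L [HL HLC]] := Hasym w.
have Hlim : braid_signature w - INR b.-1 <= L.
  apply: (lim_bound HL) => n Hn.
  have Hn' : 0 < INR n by apply: lt_0_INR; apply/ssrnat.ltP.
  have := sig_pow w n.
  move=> H.
  apply: (Rmult_le_reg_r (INR n)) => //.
  rewrite /Rdiv Rmult_assoc Rinv_l; last by lra.
  rewrite Rmult_1_r; lra.
have Hb : INR b = INR b.-1 + 1.
  by rewrite -S_INR prednK.
lra.
Qed.
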